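(* Let $M$ be a finite-dimensional $C^*$-algebra, $\Delta:M\to M\otimes M$ an injective (not necessarily unital) $*$-homomorphism with $(\Delta\otimes\mathrm{id})\circ\Delta=(\mathrm{id}\otimes\Delta)\circ\Delta$, and $S:M\to M$ a linear, unital, antimultiplicative, $*$-preserving bijection with $S^2=\mathrm{id}$ and $(S\otimes S)\circ\Delta=\varsigma\circ\Delta\circ S$. Let $\varepsilon:M\to\mathbb{C}$ be a linear map with $(\varepsilon\otimes\mathrm{id})\Delta=(\mathrm{id}\otimes\varepsilon)\Delta=\mathrm{id}$, $\varepsilon(S(x))=\varepsilon(x)$ and $\varepsilon(x^* )=\overline{\varepsilon(x)}$ for all $x\in M$. Put $e=\Delta(1)$ and $\varepsilon_s=\mu(S\otimes\mathrm{id})\Delta$. Then the following two sets of conditions are equivalent: (I) (2) $(\varepsilon\otimes\varepsilon)((x\otimes 1)e(1\otimes y))=\varepsilon(xy)$ for all $x,y\in M$, and (3) $(\varepsilon_s\otimes\mathrm{id})\Delta(x)=(1\otimes x)e$ for all $x\in M$; (II) (A2) $(\varepsilon\otimes\mathrm{id})((x\otimes 1)e(1\otimes y))=(\varepsilon\otimes\mathrm{id})((x\otimes 1)\Delta(y))$ for all $x,y\in M$; (A3) $(\mathrm{id}\otimes\varepsilon\otimes\mathrm{id})[(e\otimes 1)(1\otimes\Delta(x))]=e(1\otimes x)$ for all $x\in M$; (A4) $\varepsilon_s(x)=(\mathrm{id}\otimes\varepsilon)((1\otimes x)e)$ for all $x\in M$.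
   Context: All algebras are finite-dimensional over $\mathbb{C}$. $\varsigma:M\otimes M\to M\otimes M$ is the flip $x\otimes y\mapsto y\otimes x$, and $\mu:M\otimes M\to M$ is the linear map induced by multiplication, $\mu(x\otimes y)=xy$. *)

(* Defs.v *)
(* Finite-dimensional algebras are [falgType C] (mathcomp
   falgebra); the algebraic tensor products M (x) M and M (x) M (x) M are
   represented by coordinate arrays w.r.t. the canonical basis [vbasis {:M}]. *)
From HB Require Import structures.
From mathcomp Require Import all_boot all_order all_algebra.
From mathcomp Require Import falgebra.
Set Implicit Arguments. Unset Strict Implicit. Unset Printing Implicit Defensive.
Import Order.TTheory GRing.Theory Num.Theory.
Local Open Scope ring_scope.

Section Tensors.
Variable C : numClosedFieldType.
Variable M : falgType C.

Definition dimM : nat := \dim {:M}.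
Definition bas : dimM.-tuple M := vbasis {:M}.
Definition bi (i : 'I_dimM) : M := tnth bas i.
Definition cf (i : 'I_dimM) (x : M) : C := coord bas i x.

(* M (x) M : coefficient matrices, t = \sum_(i,j) t i j  bi i (x) bi j *)
Definition T2 := 'M[C]_dimM.
Definition T3 := {ffun 'I_dimM * 'I_dimM * 'I_dimM -> C^o}.

Definition t2 (x y : M) : T2 := \matrix_(i, j) (cf i x * cf j y).
Definition t3 (x y z : M) : T3 :=
  [ffun ijk : 'I_dimM * 'I_dimM * 'I_dimM =>
     cf ijk.1.1 x * cf ijk.1.2 y * cf ijk.2 z].

Definition mul2 (s t : T2) : T2 :=
  \sum_(i < dimM) \sum_(j < dimM) \sum_(k < dimM) \sum_(l < dimM)
     (s i j * t k l) *: t2 (bi i * bi k) (bi j * bi l).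
Definition mul3 (s t : T3) : T3 :=
  \sum_(i < dimM) \sum_(j < dimM) \sum_(k < dimM)
  \sum_(i' < dimM) \sum_(j' < dimM) \sum_(k' < dimM)
     (s (i, j, k) * t (i', j', k')) *: t3 (bi i * bi i') (bi j * bi j') (bi k * bi k').

Definition star2 (st : M -> M) (t : T2) : T2 :=
  \sum_(i < dimM) \sum_(j < dimM) (t i j)^* *: t2 (st (bi i)) (st (bi j)).

Definition map2 (f g : M -> M) (t : T2) : T2 :=
  \sum_(i < dimM) \sum_(j < dimM) t i j *: t2 (f (bi i)) (g (bi j)).

Definition flip (t : T2) : T2 :=
  \sum_(i < dimM) \sum_(j < dimM) t i j *: t2 (bi j) (bi i).

Definition mu (t : T2) : M := \sum_(i < dimM) \sum_(j < dimM) t i j *: (bi i * bi j).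

Definition slL (phi : M -> C) (t : T2) : M :=
  \sum_(i < dimM) \sum_(j < dimM) (t i j * phi (bi i)) *: bi j.
Definition slR (phi : M -> C) (t : T2) : M :=
  \sum_(i < dimM) \sum_(j < dimM) (t i j * phi (bi j)) *: bi i.
Definition sl2 (phi psi : M -> C) (t : T2) : C :=
  \sum_(i < dimM) \sum_(j < dimM) t i j * phi (bi i) * psi (bi j).
Definition slMid (phi : M -> C) (u : T3) : T2 :=
  \sum_(i < dimM) \sum_(j < dimM) \sum_(k < dimM)
     (u (i, j, k) * phi (bi j)) *: t2 (bi i) (bi k).

Definition DelL (D : M -> T2) (t : T2) : T3 :=
  \sum_(i < dimM) \sum_(j < dimM) \sum_(k < dimM) \sum_(l < dimM)
     (t i j * D (bi i) k l) *: t3 (bi k) (bi l) (bi j).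
Definition DelR (D : M -> T2) (t : T2) : T3 :=
  \sum_(i < dimM) \sum_(j < dimM) \sum_(k < dimM) \sum_(l < dimM)
     (t i j * D (bi j) k l) *: t3 (bi i) (bi k) (bi l).

Definition ext_r (t : T2) : T3 :=
  \sum_(i < dimM) \sum_(j < dimM) t i j *: t3 (bi i) (bi j) 1.
Definition ext_l (t : T2) : T3 :=
  \sum_(i < dimM) \sum_(j < dimM) t i j *: t3 1 (bi i) (bi j).

Definition star_alg (st : M -> M) : Prop :=
  [/\ forall (a : C) (x y : M), st (a *: x + y) = a^* *: st x + st y,
      forall x, st (st x) = x &
      forall x y, st (x * y) = st y * st x].

(* N is a C*-norm for the involution st (completeness is automatic in
   finite dimension). Norm values are taken in the real part of C. *)
Definition cstar_norm (st : M -> M) (N : M -> C) : Prop :=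
  [/\ forall x, 0 <= N x,
      forall x, N x = 0 -> x = 0,
      forall x y, N (x + y) <= N x + N y &
      forall (a : C) x, N (a *: x) = `|a| * N x] /\
  (forall x y, N (x * y) <= N x * N y) /\
  (forall x, N (st x * x) = N x ^+ 2).

Definition cstar_alg (st : M -> M) : Prop :=
  star_alg st /\ exists N : M -> C, cstar_norm st N.

Definition lin_M (f : M -> M) : Prop :=
  forall (a : C) (x y : M), f (a *: x + y) = a *: f x + f y.
Definition lin_T2 (f : M -> T2) : Prop :=
  forall (a : C) (x y : M), f (a *: x + y) = a *: f x + f y.
Definition lin_C (f : M -> C) : Prop :=
  forall (a : C) (x y : M), f (a *: x + y) = a * f x + f y.

End Tensors.

(* Main.v *)
Require Import Defs.
From HB Require Import structures.
From mathcomp Require Import all_boot all_order all_algebra.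
From mathcomp Require Import falgebra.
From mathcomp Require Import reals complex.
From mathcomp Require Import ring.
Import Order.TTheory GRing.Theory Num.Theory.
Local Open Scope ring_scope.

Module Aux.
Set Implicit Arguments. Unset Strict Implicit. Unset Printing Implicit Defensive.
Section Lin.
Variable C : numClosedFieldType.

Definition lin (U V : lmodType C) (f : U -> V) :=
  forall (a : C) x y, f (a *: x + y) = a *: f x + f y.

Variables (U V : lmodType C) (f : U -> V) (Hf : lin f).
Lemma lin0 : f 0 = 0.
Proof. by move: (Hf 1 0 0); rewrite scaler0 addr0 scale1r => /eqP; rewrite -subr_eq0 opprD addrA subrr sub0r oppr_eq0 => /eqP. Qed.
Lemma linD x y : f (x + y) = f x + f y.
Proof. by have := Hf 1 x y; rewrite !scale1r. Qed.
Lemma linZ a x : f (a *: x) = a *: f x.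
Proof. by have := Hf a x 0; rewrite !addr0 lin0 addr0. Qed.
Lemma linS (I : Type) (r : seq I) (P : pred I) (F : I -> U) :
  f (\sum_(i <- r | P i) F i) = \sum_(i <- r | P i) f (F i).
Proof. exact: (big_morph f linD lin0). Qed.
End Lin.

Section T.
Variable C : numClosedFieldType.
Variable M : falgType C.
Local Notation I := 'I_(dimM M).
Local Notation T2 := (T2 M).
Local Notation T3 := (T3 M).
Local Notation bi := (@bi C M).
Local Notation cf := (@cf C M).

Lemma cf_lin i : lin (cf i : M -> C^o).
Proof. by move=> a x y; rewrite /cf linearP. Qed.
Lemma cf_linE i (a : C) (x y : M) : cf i (a *: x + y) = a * cf i x + cf i y.
Proof. by rewrite /cf linearP. Qed.

Lemma bi_cf i j : cf j (bi i) = (i == j)%:R.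
Proof.
rewrite /cf /bi (tnth_nth 0) coord_free //; exact: basis_free (vbasisP _).
Qed.

Lemma expandM (x : M) : x = \sum_i cf i x *: bi i.
Proof.
rewrite {1}(coord_vbasis (memvf x)); apply: eq_bigr => i _.
by rewrite /bi /cf (tnth_nth 0).
Qed.

Lemma sum_dl (V : lmodType C) (i : I) (v : I -> V) :
  \sum_(a : I) (a == i)%:R *: v a = v i.
Proof.
rewrite (bigD1 i) //= eqxx scale1r big1 ?addr0 // => a /negbTE ->.
by rewrite scale0r.
Qed.
Lemma sum_dr (V : lmodType C) (i : I) (v : I -> V) :
  \sum_(a : I) (i == a)%:R *: v a = v i.
Proof. by rewrite -(sum_dl i v); apply: eq_bigr => a _; rewrite eq_sym. Qed.

Definition linL (W : lmodType C) (F : M -> M -> W) := forall y, lin (F^~ y).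
Definition linR (W : lmodType C) (F : M -> M -> W) := forall x, lin (F x).

Lemma bil_expand (W : lmodType C) (F : M -> M -> W) x y :
  linL F -> linR F ->
  \sum_i \sum_j (cf i x * cf j y) *: F (bi i) (bi j) = F x y.
Proof.
move=> HL HR.
have -> : F x y = F (\sum_i cf i x *: bi i) y by rewrite -expandM.
rewrite (linS (HL y)).
apply: eq_bigr => i _; rewrite (linZ (HL y)).
have -> : F (bi i) y = F (bi i) (\sum_j cf j y *: bi j) by rewrite -expandM.
rewrite (linS (HR _)).
rewrite scaler_sumr; apply: eq_bigr => j _.
by rewrite (linZ (HR _)) scalerA.
Qed.

Lemma t2E (x y : M) i j : t2 x y i j = cf i x * cf j y.
Proof. by rewrite mxE. Qed.

Lemma t2_linL : linL (@t2 C M).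
Proof. by move=> y a x x'; apply/matrixP=> i j; rewrite !mxE cf_linE mulrDl mulrA. Qed.
Lemma t2_linR : linR (@t2 C M).
Proof. by move=> x a y y'; apply/matrixP=> i j; rewrite !mxE cf_linE mulrDr mulrCA. Qed.

Lemma t2_bi i j : t2 (bi i) (bi j) = delta_mx i j.
Proof. by apply/matrixP=> k l; rewrite !mxE !bi_cf -natrM mulnb (eq_sym i) (eq_sym j). Qed.

Lemma T2_expand (t : T2) : t = \sum_i \sum_j t i j *: t2 (bi i) (bi j).
Proof.
rewrite {1}(matrix_sum_delta t); apply: eq_bigr => i _; apply: eq_bigr => j _.
by rewrite t2_bi.
Qed.

Lemma coef2_lin (W : lmodType C) (X : I -> I -> W) :
  lin (fun t : T2 => \sum_i \sum_j t i j *: X i j).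
Proof.
move=> a s t; rewrite scaler_sumr -big_split; apply: eq_bigr => i _.
rewrite scaler_sumr -big_split; apply: eq_bigr => j _.
by rewrite !mxE scalerDl scalerA.
Qed.

Lemma coef2_t2 (W : lmodType C) (F : M -> M -> W) x y :
  linL F -> linR F ->
  \sum_i \sum_j t2 x y i j *: F (bi i) (bi j) = F x y.
Proof.
move=> HL HR; rewrite -(bil_expand x y HL HR).
by apply: eq_bigr => i _; apply: eq_bigr => j _; rewrite t2E.
Qed.

Lemma T2_ext (W : lmodType C) (F G : T2 -> W) :
  lin F -> lin G -> (forall i j, F (t2 (bi i) (bi j)) = G (t2 (bi i) (bi j))) ->
  forall t, F t = G t.
Proof.
move=> HF HG H t; rewrite (T2_expand t) (linS HF) (linS HG).
apply: eq_bigr => i _; rewrite (linS HF) (linS HG); apply: eq_bigr => j _.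
by rewrite (linZ HF) (linZ HG) H.
Qed.

Lemma lin_expand (W : lmodType C) (F : T2 -> W) t :
  lin F -> F t = \sum_i \sum_j t i j *: F (t2 (bi i) (bi j)).
Proof.
move=> HF; rewrite {1}(T2_expand t) (linS HF); apply: eq_bigr => i _.
by rewrite (linS HF); apply: eq_bigr => j _; rewrite (linZ HF).
Qed.


Lemma lin_comp (U V W : lmodType C) (f : V -> W) (g : U -> V) :
  lin f -> lin g -> lin (fun x => f (g x)).
Proof. by move=> Hf Hg a x y; rewrite Hg Hf. Qed.

Lemma lin_ext (U V : lmodType C) (f g : U -> V) :
  (forall x, f x = g x) -> lin g -> lin f.
Proof. by move=> E Hg a x y; rewrite !E. Qed.

Lemma lin_sum2 (U V : lmodType C) (c : I -> I -> C) (G : I -> I -> U -> V) :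
  (forall i j, lin (G i j)) -> lin (fun t => \sum_i \sum_j c i j *: G i j t).
Proof.
move=> H a x y; rewrite scaler_sumr -big_split; apply: eq_bigr => i _.
rewrite scaler_sumr -big_split; apply: eq_bigr => j _.
by rewrite H scalerDr !scalerA mulrC.
Qed.

Lemma lin_mull (x : M) : lin (fun u : M => x * u).
Proof. by move=> a u v; rewrite mulrDr scalerAr. Qed.
Lemma lin_mulr (x : M) : lin (fun u : M => u * x).
Proof. by move=> a u v; rewrite mulrDl scalerAl. Qed.
Lemma lin_id (U : lmodType C) : lin (fun u : U => u).
Proof. by []. Qed.

Lemma linC_lin (phi : M -> C) : lin_C phi -> lin (phi : M -> C^o).
Proof. by move=> H a x y; rewrite H. Qed.

Lemma mul2_sform (s t : T2) : mul2 s t =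
  \sum_i \sum_j s i j *: (\sum_k \sum_l t k l *: t2 (bi i * bi k) (bi j * bi l)).
Proof.
rewrite /mul2; apply: eq_bigr => i _; apply: eq_bigr => j _.
rewrite scaler_sumr; apply: eq_bigr => k _; rewrite scaler_sumr.
by apply: eq_bigr => l _; rewrite scalerA.
Qed.

Lemma mul2_linl (t : T2) : lin (fun s : T2 => mul2 s t).
Proof. exact: lin_ext (fun s => mul2_sform s t) (coef2_lin _). Qed.
Lemma mul2_linr (s : T2) : lin (mul2 s).
Proof.
apply: lin_ext (fun t => mul2_sform s t) _.
by apply: lin_sum2 => i j; apply: coef2_lin.
Qed.

Lemma t2_linL' (f : M -> M) (y : M) : lin f -> lin (fun u => t2 (f u) y).
Proof. by move=> Hf; apply: lin_comp (t2_linL y) Hf. Qed.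
Lemma t2_linR' (f : M -> M) (x : M) : lin f -> lin (fun u => t2 x (f u)).
Proof. by move=> Hf; apply: lin_comp (t2_linR x) Hf. Qed.

Lemma mul2_t2 (a b c d : M) : mul2 (t2 a b) (t2 c d) = t2 (a * c) (b * d).
Proof.
rewrite mul2_sform.
under eq_bigr => i _ do under eq_bigr => j _ do
  rewrite (coef2_t2 (F := fun u v => t2 (bi i * u) (bi j * v)) c d
    (fun y => t2_linL' _ (lin_mull _)) (fun x => t2_linR' _ (lin_mull _))).
exact: (coef2_t2 (F := fun u v => t2 (u * c) (v * d)) a b
    (fun y => t2_linL' _ (lin_mulr _)) (fun x => t2_linR' _ (lin_mulr _))).
Qed.

Lemma map2_lin (f g : M -> M) : lin (map2 f g).
Proof. exact: coef2_lin. Qed.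
Lemma map2_t2 (f g : M -> M) (a b : M) : lin f -> lin g -> map2 f g (t2 a b) = t2 (f a) (g b).
Proof.
move=> Hf Hg; exact: (coef2_t2 (F := fun u v => t2 (f u) (g v)) a b
    (fun y => t2_linL' _ Hf) (fun x => t2_linR' _ Hg)).
Qed.

Lemma slL_form (phi : M -> C) (t : T2) :
  slL phi t = \sum_i \sum_j t i j *: (phi (bi i) *: bi j).
Proof. by apply: eq_bigr => i _; apply: eq_bigr => j _; rewrite scalerA. Qed.
Lemma slR_form (phi : M -> C) (t : T2) :
  slR phi t = \sum_i \sum_j t i j *: (phi (bi j) *: bi i).
Proof. by apply: eq_bigr => i _; apply: eq_bigr => j _; rewrite scalerA. Qed.
Lemma slL_lin (phi : M -> C) : lin (slL phi).
Proof. exact: lin_ext (slL_form phi) (coef2_lin _). Qed.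
Lemma slR_lin (phi : M -> C) : lin (slR phi).
Proof. exact: lin_ext (slR_form phi) (coef2_lin _). Qed.

Lemma slL_t2 (phi : M -> C) (a b : M) : lin (phi : M -> C^o) -> slL phi (t2 a b) = phi a *: b.
Proof.
move=> Hp; rewrite slL_form.
apply: (coef2_t2 (F := fun u v => phi u *: v)) => [y|x] c u v.
  by rewrite (Hp c u v) scalerDl scalerA.
by rewrite scalerDr !scalerA mulrC.
Qed.
Lemma slR_t2 (phi : M -> C) (a b : M) : lin (phi : M -> C^o) -> slR phi (t2 a b) = phi b *: a.
Proof.
move=> Hp; rewrite slR_form.
apply: (coef2_t2 (F := fun u v => phi v *: u)) => [y|x] c u v.
  by rewrite scalerDr !scalerA mulrC.
by rewrite (Hp c u v) scalerDl scalerA.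
Qed.

Lemma sl2_slL (phi psi : M -> C) (t : T2) : lin (psi : M -> C^o) ->
  sl2 phi psi t = psi (slL phi t).
Proof.
move=> Hp; rewrite /sl2 /slL (linS Hp); apply: eq_bigr => i _.
by rewrite (linS Hp); apply: eq_bigr => j _; rewrite (linZ Hp).
Qed.


Definition alin (U V : lmodType C) (f : U -> V) :=
  forall (a : C) x y, f (a *: x + y) = a^* *: f x + f y.

Section ALin.
Variables (U V : lmodType C) (f : U -> V) (Hf : alin f).
Lemma alin0 : f 0 = 0.
Proof. by move: (Hf 1 0 0); rewrite scaler0 addr0 conjC1 scale1r => /eqP; rewrite -subr_eq0 opprD addrA subrr sub0r oppr_eq0 => /eqP. Qed.
Lemma alinD x y : f (x + y) = f x + f y.
Proof. by have := Hf 1 x y; rewrite conjC1 !scale1r. Qed.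
Lemma alinZ a x : f (a *: x) = a^* *: f x.
Proof. by have := Hf a x 0; rewrite !addr0 alin0 addr0. Qed.
Lemma alinS (J : Type) (r : seq J) (P : pred J) (F : J -> U) :
  f (\sum_(i <- r | P i) F i) = \sum_(i <- r | P i) f (F i).
Proof. exact: (big_morph f alinD alin0). Qed.
End ALin.

Variable st : M -> M.
Hypothesis Hst : alin st.

Lemma star2_alin : alin (star2 st).
Proof.
move=> a s t; rewrite /star2 scaler_sumr -big_split; apply: eq_bigr => i _.
rewrite scaler_sumr -big_split; apply: eq_bigr => j _.
by rewrite !mxE rmorphD rmorphM scalerDl scalerA.
Qed.

Lemma expand_st (x : M) : st x = \sum_i (cf i x)^* *: st (bi i).
Proof.
rewrite {1}(expandM x) (alinS Hst); apply: eq_bigr => i _; by rewrite (alinZ Hst).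
Qed.

Lemma star2_t2 (a b : M) : star2 st (t2 a b) = t2 (st a) (st b).
Proof.
rewrite /star2 (expand_st a) (linS (t2_linL _)).
apply: eq_bigr => i _; rewrite (linZ (t2_linL _)) (expand_st b) (linS (t2_linR _)).
rewrite scaler_sumr; apply: eq_bigr => j _.
by rewrite (linZ (t2_linR _)) scalerA t2E rmorphM.
Qed.

Lemma star2_sum (c : I -> I -> C) (x y : I -> I -> M) :
  star2 st (\sum_i \sum_j c i j *: t2 (x i j) (y i j)) =
  \sum_i \sum_j (c i j)^* *: t2 (st (x i j)) (st (y i j)).
Proof.
rewrite (alinS star2_alin); apply: eq_bigr => i _.
rewrite (alinS star2_alin); apply: eq_bigr => j _.
by rewrite (alinZ star2_alin) star2_t2.
Qed.

Hypothesis stK : forall x, st (st x) = x.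
Hypothesis stM : forall x y, st (x * y) = st y * st x.

Lemma star2K t : star2 st (star2 st t) = t.
Proof.
rewrite {2}/star2 star2_sum [RHS]T2_expand.
by apply: eq_bigr => i _; apply: eq_bigr => j _; rewrite conjCK !stK.
Qed.

Lemma star2_mul2_l (a b : M) s :
  star2 st (mul2 (t2 a b) s) = mul2 (star2 st s) (t2 (st a) (st b)).
Proof.
rewrite (lin_expand s (mul2_linr _)).
under eq_bigr => i _ do under eq_bigr => j _ do rewrite mul2_t2.
rewrite star2_sum /star2 (linS (mul2_linl _)); apply: eq_bigr => i _.
rewrite (linS (mul2_linl _)); apply: eq_bigr => j _.
by rewrite (linZ (mul2_linl _)) mul2_t2 !stM.
Qed.

Lemma star2_mul2_r (a b : M) s :
  star2 st (mul2 s (t2 a b)) = mul2 (t2 (st a) (st b)) (star2 st s).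
Proof.
rewrite (lin_expand s (mul2_linl _)).
under eq_bigr => i _ do under eq_bigr => j _ do rewrite mul2_t2.
rewrite star2_sum /star2 (linS (mul2_linr _)); apply: eq_bigr => i _.
rewrite (linS (mul2_linr _)); apply: eq_bigr => j _.
by rewrite (linZ (mul2_linr _)) mul2_t2 !stM.
Qed.

End T.

Section T3s.
Variable C : numClosedFieldType.
Variable M : falgType C.
Local Notation I := 'I_(dimM M).
Local Notation T2 := (T2 M).
Local Notation T3 := (T3 M).
Local Notation bi := (@bi C M).
Local Notation cf := (@cf C M).

Lemma lin1_expand (W : lmodType C) (g : M -> W) z :
  lin g -> \sum_k cf k z *: g (bi k) = g z.
Proof.
move=> Hg; have -> : g z = g (\sum_k cf k z *: bi k) by rewrite -expandM.
by rewrite (linS Hg); apply: eq_bigr => k _; rewrite (linZ Hg).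
Qed.

Definition linT1 (W : lmodType C) (F : M -> M -> M -> W) := forall y z, lin (fun x => F x y z).
Definition linT2 (W : lmodType C) (F : M -> M -> M -> W) := forall x z, lin (fun y => F x y z).
Definition linT3 (W : lmodType C) (F : M -> M -> M -> W) := forall x y, lin (fun z => F x y z).

Lemma tril_expand (W : lmodType C) (F : M -> M -> M -> W) x y z :
  linT1 F -> linT2 F -> linT3 F ->
  \sum_i \sum_j \sum_k (cf i x * cf j y * cf k z) *: F (bi i) (bi j) (bi k) = F x y z.
Proof.
move=> H1 H2 H3.
rewrite -(bil_expand (F := fun u v => F u v z) x y (fun v => H1 v z) (fun u => H2 u z)).
apply: eq_bigr => i _; apply: eq_bigr => j _.
rewrite -(lin1_expand z (H3 _ _)) scaler_sumr; apply: eq_bigr => k _.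
by rewrite scalerA.
Qed.

Lemma t3E (x y z : M) i j k : t3 x y z (i, j, k) = cf i x * cf j y * cf k z.
Proof. by rewrite ffunE. Qed.

Lemma t3_lin1 : linT1 (@t3 C M).
Proof. move=> y z a u v; apply/ffunP=> [[[i j] k]]; rewrite !ffunE /= cf_linE -[a *: _]/(a * _); ring. Qed.
Lemma t3_lin2 : linT2 (@t3 C M).
Proof. move=> x z a u v; apply/ffunP=> [[[i j] k]]; rewrite !ffunE /= cf_linE -[a *: _]/(a * _); ring. Qed.
Lemma t3_lin3 : linT3 (@t3 C M).
Proof. move=> x y a u v; apply/ffunP=> [[[i j] k]]; rewrite !ffunE /= cf_linE -[a *: _]/(a * _); ring. Qed.

Lemma coef3_lin (W : lmodType C) (X : I -> I -> I -> W) :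
  lin (fun u : T3 => \sum_i \sum_j \sum_k u (i, j, k) *: X i j k).
Proof.
move=> a s t; rewrite scaler_sumr -big_split; apply: eq_bigr => i _.
rewrite scaler_sumr -big_split; apply: eq_bigr => j _.
rewrite scaler_sumr -big_split; apply: eq_bigr => k _.
by rewrite !ffunE scalerDl scalerA.
Qed.

Lemma coef3_t3 (W : lmodType C) (F : M -> M -> M -> W) x y z :
  linT1 F -> linT2 F -> linT3 F ->
  \sum_i \sum_j \sum_k t3 x y z (i, j, k) *: F (bi i) (bi j) (bi k) = F x y z.
Proof.
move=> H1 H2 H3; rewrite -(tril_expand x y z H1 H2 H3).
by apply: eq_bigr => i _; apply: eq_bigr => j _; apply: eq_bigr => k _; rewrite t3E.
Qed.

Lemma lin_sum3 (U V : lmodType C) (c : I -> I -> I -> C) (G : I -> I -> I -> U -> V) :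
  (forall i j k, lin (G i j k)) -> lin (fun t => \sum_i \sum_j \sum_k c i j k *: G i j k t).
Proof.
move=> H a x y; rewrite scaler_sumr -big_split; apply: eq_bigr => i _.
rewrite scaler_sumr -big_split; apply: eq_bigr => j _.
rewrite scaler_sumr -big_split; apply: eq_bigr => k _.
by rewrite H scalerDr !scalerA mulrC.
Qed.

Lemma mul3_sform (s t : T3) : mul3 s t =
  \sum_i \sum_j \sum_k s (i, j, k) *: (\sum_i' \sum_j' \sum_k' t (i', j', k') *:
     t3 (bi i * bi i') (bi j * bi j') (bi k * bi k')).
Proof.
rewrite /mul3; apply: eq_bigr => i _; apply: eq_bigr => j _; apply: eq_bigr => k _.
rewrite scaler_sumr; apply: eq_bigr => i' _; rewrite scaler_sumr.
apply: eq_bigr => j' _; rewrite scaler_sumr.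
by apply: eq_bigr => k' _; rewrite scalerA.
Qed.

Lemma mul3_linl (t : T3) : lin (fun s : T3 => mul3 s t).
Proof. exact: lin_ext (fun s => mul3_sform s t) (coef3_lin _). Qed.
Lemma mul3_linr (s : T3) : lin (mul3 s).
Proof.
apply: lin_ext (fun t => mul3_sform s t) _.
by apply: lin_sum3 => i j k; apply: coef3_lin.
Qed.

Lemma mul3_t3 (a b c a' b' c' : M) :
  mul3 (t3 a b c) (t3 a' b' c') = t3 (a * a') (b * b') (c * c').
Proof.
rewrite mul3_sform.
under eq_bigr => i _ do under eq_bigr => j _ do under eq_bigr => k _ do
  rewrite (coef3_t3 (F := fun u v w => t3 (bi i * u) (bi j * v) (bi k * w)) a' b' c'
    (fun y z => lin_comp (t3_lin1 _ _) (lin_mull _))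
    (fun x z => lin_comp (t3_lin2 _ _) (lin_mull _))
    (fun x y => lin_comp (t3_lin3 _ _) (lin_mull _))).
exact: (coef3_t3 (F := fun u v w => t3 (u * a') (v * b') (w * c')) a b c
    (fun y z => lin_comp (t3_lin1 _ _) (lin_mulr _))
    (fun x z => lin_comp (t3_lin2 _ _) (lin_mulr _))
    (fun x y => lin_comp (t3_lin3 _ _) (lin_mulr _))).
Qed.

Lemma slMid_form (phi : M -> C) (u : T3) :
  slMid phi u = \sum_i \sum_j \sum_k u (i, j, k) *: (phi (bi j) *: t2 (bi i) (bi k)).
Proof.
by apply: eq_bigr => i _; apply: eq_bigr => j _; apply: eq_bigr => k _; rewrite scalerA.
Qed.
Lemma slMid_lin (phi : M -> C) : lin (slMid phi).
Proof. exact: lin_ext (slMid_form phi) (coef3_lin _). Qed.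
Lemma slMid_t3 (phi : M -> C) (a b c : M) : lin (phi : M -> C^o) ->
  slMid phi (t3 a b c) = phi b *: t2 a c.
Proof.
move=> Hp; rewrite slMid_form.
apply: (coef3_t3 (F := fun u v w => phi v *: t2 u w)) => [y z|x z|x y] e u v.
- by rewrite (t2_linL _) scalerDr !scalerA mulrC.
- by rewrite (Hp e u v) scalerDl scalerA.
- by rewrite (t2_linR _) scalerDr !scalerA mulrC.
Qed.

Lemma ext_r_lin : lin (@ext_r C M).
Proof. exact: coef2_lin. Qed.
Lemma ext_l_lin : lin (@ext_l C M).
Proof. exact: coef2_lin. Qed.
Lemma ext_r_t2 (a b : M) : ext_r (t2 a b) = t3 a b 1.
Proof.
exact: (coef2_t2 (F := fun u v => t3 u v 1) a b (fun y => t3_lin1 _ _) (fun x => t3_lin2 _ _)).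
Qed.
Lemma ext_l_t2 (a b : M) : ext_l (t2 a b) = t3 1 a b.
Proof.
exact: (coef2_t2 (F := fun u v => t3 1 u v) a b (fun y => t3_lin2 _ _) (fun x => t3_lin3 _ _)).
Qed.

End T3s.

Section Main.
Variable C : numClosedFieldType.
Variable M : falgType C.
Local Notation I := 'I_(dimM M).
Local Notation T2 := (T2 M).
Local Notation bi := (@bi C M).
Local Notation cf := (@cf C M).

Definition Gf (phi : M -> C) (t : T2) (b : M) := slL phi (mul2 (t2 b 1) t).
Definition Kf (phi : M -> C) (t : T2) (b : M) := slL phi (mul2 t (t2 b 1)).

Variable phi : M -> C.
Hypothesis Hp : lin (phi : M -> C^o).

Lemma Gf_lin t : lin (Gf phi t).
Proof. exact: lin_comp (slL_lin phi) (lin_comp (mul2_linl t) (t2_linL 1)). Qed.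
Lemma Kf_lin t : lin (Kf phi t).
Proof. exact: lin_comp (slL_lin phi) (lin_comp (mul2_linr t) (t2_linL 1)). Qed.

Lemma Gf_form t b : Gf phi t b = \sum_k \sum_l t k l *: (phi (b * bi k) *: bi l).
Proof.
rewrite /Gf (lin_expand t (lin_comp (slL_lin phi) (mul2_linr _))).
by apply: eq_bigr => k _; apply: eq_bigr => l _; rewrite mul2_t2 slL_t2 // mul1r.
Qed.
Lemma Kf_form t b : Kf phi t b = \sum_k \sum_l t k l *: (phi (bi k * b) *: bi l).
Proof.
rewrite /Kf (lin_expand t (lin_comp (slL_lin phi) (mul2_linl _))).
by apply: eq_bigr => k _; apply: eq_bigr => l _; rewrite mul2_t2 slL_t2 // mulr1.
Qed.

Lemma map2_ext (f f' g : M -> M) t : (forall a, f a = f' a) -> map2 f g t = map2 f' g t.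
Proof. by move=> H; rewrite /map2; under eq_bigr do under eq_bigr do rewrite H. Qed.

Lemma L2 (s t : T2) : slMid phi (mul3 (ext_r s) (ext_l t)) = map2 id (Gf phi t) s.
Proof.
rewrite (lin_expand s (F := fun s => slMid phi (mul3 (ext_r s) (ext_l t))));
  last exact: lin_comp (slMid_lin phi) (lin_comp (mul3_linl _) (@ext_r_lin C M)).
apply: eq_bigr => i _; apply: eq_bigr => j _; congr (_ *: _).
rewrite ext_r_t2 (lin_expand t (F := fun t => slMid phi (mul3 (t3 (bi i) (bi j) 1) (ext_l t))));
  last exact: lin_comp (slMid_lin phi) (lin_comp (mul3_linr _) (@ext_l_lin C M)).
rewrite Gf_form (linS (t2_linR _)); apply: eq_bigr => k _.
rewrite (linS (t2_linR _)); apply: eq_bigr => l _.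
by rewrite ext_l_t2 mul3_t3 slMid_t3 // mulr1 mul1r !(linZ (t2_linR _)).
Qed.


Lemma swap4 (W : lmodType C) (c d : I -> I -> C) (X : I -> I -> I -> I -> W) :
  \sum_k \sum_l c k l *: \sum_i \sum_j d i j *: X i j k l =
  \sum_i \sum_j d i j *: \sum_k \sum_l c k l *: X i j k l.
Proof.
have E : forall (Y : I -> I -> I -> I -> W),
  \sum_k \sum_l \sum_i \sum_j Y k l i j = \sum_i \sum_j \sum_k \sum_l Y k l i j.
  move=> Y.
  under eq_bigr => k _ do under eq_bigr => l _ do rewrite pair_big.
  rewrite pair_big exchange_big /=.
  symmetry; under eq_bigr => i _ do under eq_bigr => j _ do rewrite pair_big.
  by rewrite pair_big.
transitivity (\sum_k \sum_l \sum_i \sum_j (c k l * d i j) *: X i j k l).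
  apply: eq_bigr => k _; apply: eq_bigr => l _.
  rewrite scaler_sumr; apply: eq_bigr => i _; rewrite scaler_sumr.
  by apply: eq_bigr => j _; rewrite scalerA.
rewrite E; apply: eq_bigr => i _; apply: eq_bigr => j _.
rewrite scaler_sumr; apply: eq_bigr => k _; rewrite scaler_sumr.
by apply: eq_bigr => l _; rewrite scalerA mulrC.
Qed.

Lemma L1 (s t : T2) :
  map2 (fun a => slR phi (mul2 (t2 1 a) s)) id t = map2 id (Kf phi t) s.
Proof.
rewrite /map2.
transitivity (\sum_k \sum_l t k l *: \sum_i \sum_j s i j *:
    (phi (bi k * bi j) *: t2 (bi i) (bi l))).
  apply: eq_bigr => k _; apply: eq_bigr => l _; congr (_ *: _).
  rewrite (lin_expand s (F := fun s => slR phi (mul2 (t2 1 (bi k)) s)));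
    last exact: lin_comp (slR_lin phi) (mul2_linr _).
  rewrite (linS (t2_linL _)); apply: eq_bigr => i _.
  rewrite (linS (t2_linL _)); apply: eq_bigr => j _.
  by rewrite mul2_t2 slR_t2 // mul1r !(linZ (t2_linL _)).
rewrite swap4; apply: eq_bigr => i _; apply: eq_bigr => j _; congr (_ *: _).
rewrite Kf_form (linS (t2_linR _)); apply: eq_bigr => k _.
rewrite (linS (t2_linR _)); apply: eq_bigr => l _.
by rewrite !(linZ (t2_linR _)).
Qed.

Lemma slR_map2 (f : M -> M) t : lin f -> slR phi (map2 f id t) = f (slR phi t).
Proof.
move=> Hf; apply: (T2_ext (F := fun t => slR phi (map2 f id t)) (G := fun t => f (slR phi t))) => //.
- exact: lin_comp (slR_lin phi) (map2_lin f id).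
- exact: lin_comp Hf (slR_lin phi).
by move=> i j; rewrite map2_t2 // !slR_t2 // (linZ Hf).
Qed.

Lemma lemB (x : M) (g : M -> M) s : lin g ->
  slL phi (mul2 (t2 x 1) (map2 id g s)) = g (slL phi (mul2 (t2 x 1) s)).
Proof.
move=> Hg; apply: (T2_ext (F := fun s => slL phi (mul2 (t2 x 1) (map2 id g s)))
  (G := fun s => g (slL phi (mul2 (t2 x 1) s)))) => //.
- exact: lin_comp (slL_lin phi) (lin_comp (mul2_linr _) (map2_lin id g)).
- exact: lin_comp Hg (lin_comp (slL_lin phi) (mul2_linr _)).
by move=> i j; rewrite map2_t2 // !mul2_t2 !slL_t2 // !mul1r (linZ Hg).
Qed.

Lemma lemC (x y : M) s :
  mul2 (mul2 (t2 x 1) s) (t2 1 y) = mul2 (t2 x 1) (mul2 s (t2 1 y)).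
Proof.
apply: (T2_ext (F := fun s => mul2 (mul2 (t2 x 1) s) (t2 1 y))
  (G := fun s => mul2 (t2 x 1) (mul2 s (t2 1 y)))) => //.
- exact: lin_comp (mul2_linl _) (mul2_linr _).
- exact: lin_comp (mul2_linr _) (mul2_linl _).
by move=> i j; rewrite !mul2_t2 !mulr1 !mul1r.
Qed.

Lemma lemD s (w : M) : slL phi (mul2 s (t2 1 w)) = slL phi s * w.
Proof.
apply: (T2_ext (F := fun s => slL phi (mul2 s (t2 1 w)))
  (G := fun s => slL phi s * w)) => //.
- exact: lin_comp (slL_lin phi) (mul2_linl _).
- exact: lin_comp (lin_mulr w) (slL_lin phi).
by move=> i j; rewrite !mul2_t2 !slL_t2 // mulr1 scalerAl.
Qed.

Lemma lemF (x : M) t : sl2 phi phi (mul2 (t2 x 1) t) = phi (x * slR phi t).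
Proof.
rewrite sl2_slL //.
apply: (T2_ext (F := fun t => (phi (slL phi (mul2 (t2 x 1) t)) : C^o))
  (G := fun t => (phi (x * slR phi t) : C^o))) => //.
- exact: lin_comp Hp (lin_comp (slL_lin phi) (mul2_linr _)).
- exact: lin_comp Hp (lin_comp (lin_mull x) (slR_lin phi)).
move=> i j; rewrite mul2_t2 slL_t2 // slR_t2 // mul1r -scalerAr !(linZ Hp).
by rewrite -[LHS]/(_ * _) -[RHS]/(_ * _) mulrC.
Qed.

End Main.

Section Star.
Variable C : numClosedFieldType.
Variable M : falgType C.
Local Notation T2 := (T2 M).
Local Notation bi := (@bi C M).
Variable phi : M -> C.
Hypothesis Hp : lin (phi : M -> C^o).
Variable st : M -> M.
Hypothesis Hst : alin st.
Hypothesis stK : forall x, st (st x) = x.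
Hypothesis stM : forall x y, st (x * y) = st y * st x.
Hypothesis phist : forall x, phi (st x) = (phi x)^*.

Lemma stG (t : T2) b : st (Gf phi (star2 st t) b) = Kf phi t (st b).
Proof.
rewrite Kf_form // /Gf {1}/star2.
rewrite (linS (lin_comp (slL_lin phi) (mul2_linr (t2 b 1)))) (alinS Hst).
apply: eq_bigr => k _.
rewrite (linS (lin_comp (slL_lin phi) (mul2_linr (t2 b 1)))) (alinS Hst).
apply: eq_bigr => l _.
rewrite (linZ (lin_comp (slL_lin phi) (mul2_linr (t2 b 1)))) /= mul2_t2 slL_t2 //.
by rewrite !(alinZ Hst) conjCK mul1r stK -phist stM stK.
Qed.

Lemma L3 (s t : T2) :
  star2 st (map2 id (Gf phi (star2 st t)) s) = map2 id (Kf phi t) (star2 st s).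
Proof.
rewrite {1}/map2 star2_sum // {2}/star2 (linS (map2_lin _ _)).
apply: eq_bigr => i _; rewrite (linS (map2_lin _ _)); apply: eq_bigr => j _.
by rewrite (linZ (map2_lin _ _)) map2_t2 //= ?stG //; apply: Kf_lin.
Qed.

End Star.

End Aux.
Import Aux.

Theorem proposition2p1p2 (R : realType) (M : falgType R[i]) (st : M -> M)
  (Delta : M -> T2 M) (S : M -> M) (eps : M -> R[i]) :
  cstar_alg st ->
  (* Delta : injective *-homomorphism, coassociative *)
  lin_T2 Delta ->
  (forall x y : M, Delta (x * y) = mul2 (Delta x) (Delta y)) ->
  (forall x : M, Delta (st x) = star2 st (Delta x)) ->
  injective Delta ->
  (forall x : M, DelL Delta (Delta x) = DelR Delta (Delta x)) ->
  (* S : linear unital antimultiplicative *-preserving involutive bijection *)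
  lin_M S -> S 1 = 1 ->
  (forall x y : M, S (x * y) = S y * S x) ->
  (forall x : M, S (st x) = st (S x)) ->
  bijective S ->
  (forall x : M, S (S x) = x) ->
  (forall x : M, map2 S S (Delta x) = flip (Delta (S x))) ->
  (* counit *)
  lin_C eps ->
  (forall x : M, slL eps (Delta x) = x) ->
  (forall x : M, slR eps (Delta x) = x) ->
  (forall x : M, eps (S x) = eps x) ->
  (forall x : M, eps (st x) = (eps x)^*) ->
  let e := Delta 1 in
  let eps_s := fun x : M => mu (map2 S id (Delta x)) in
  ((forall x y : M,
      sl2 eps eps (mul2 (mul2 (t2 x 1) e) (t2 1 y)) = eps (x * y))
   /\ (forall x : M, map2 eps_s id (Delta x) = mul2 (t2 1 x) e))
  <->
  ((forall x y : M,
      slL eps (mul2 (mul2 (t2 x 1) e) (t2 1 y)) = slL eps (mul2 (t2 x 1) (Delta y)))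
   /\ (forall x : M,
      slMid eps (mul3 (ext_r e) (ext_l (Delta x))) = mul2 e (t2 1 x))
   /\ (forall x : M, eps_s x = slR eps (mul2 (t2 1 x) e))).
Proof.
move=> [[Hst stK stM] _] HDl _ HDs _ _ HSl _ _ _ _ _ _ Heps _ HepsR _ Hepsst e eps_s.
have Hp := linC_lin Heps.
have HD : lin Delta by exact: HDl.
have HS : lin S by exact: HSl.
have Hst' : alin st by exact: Hst.
have st1 : st 1 = 1.
  by have := stM (st 1) 1; rewrite mulr1 stK mulr1 => <-.
have estar : star2 st e = e by rewrite /e -HDs st1.
have Hmu : lin (@mu _ M).
  exact: coef2_lin.
have Heps_s : lin eps_s.
  exact: lin_comp Hmu (lin_comp (map2_lin S id) HD).
have L2e : forall y, slMid eps (mul3 (ext_r e) (ext_l (Delta y))) = map2 id (Gf eps (Delta y)) e.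
  by move=> y; rewrite (L2 Hp).
split.
- move=> [H2 H3].
  have A4 : forall x, eps_s x = slR eps (mul2 (t2 1 x) e).
    by move=> x; rewrite -H3 (slR_map2 Hp _ Heps_s) HepsR.
  have K3 : forall x, map2 id (Kf eps (Delta x)) e = mul2 (t2 1 x) e.
    move=> x; rewrite -H3 -(L1 Hp); symmetry; apply: map2_ext => a; exact: A4.
  have A3' : forall y, map2 id (Gf eps (Delta y)) e = mul2 e (t2 1 y).
    move=> y; rewrite -[y]stK HDs -[LHS](star2K Hst' stK) (L3 Hp Hst' stK stM Hepsst) estar K3.
    by rewrite (star2_mul2_l Hst' stM) estar st1.
  split; [|split].
  + move=> x y; rewrite lemC -A3' (lemB Hp _ _ (Gf_lin _ _)).
    transitivity (Gf eps (Delta y) x); last by [].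
    rewrite !(Gf_form Hp); apply: eq_bigr => k _; apply: eq_bigr => l _.
    have -> : eps (slL eps (mul2 (t2 x 1) e) * bi k) = eps (x * bi k).
      by rewrite -(lemD Hp) -(sl2_slL _ _ Hp) H2.
    by [].
  + by move=> x; rewrite L2e A3'.
  + exact: A4.
- move=> [A2 [A3 A4]].
  have A3' : forall y, map2 id (Gf eps (Delta y)) e = mul2 e (t2 1 y).
    by move=> y; rewrite -L2e A3.
  split.
  + by move=> x y; rewrite (sl2_slL _ _ Hp) A2 -(sl2_slL _ _ Hp) (lemF Hp) HepsR.
  + move=> x; rewrite (map2_ext _ _ A4) (L1 Hp) -{1}estar -(L3 Hp Hst' stK stM Hepsst) -HDs A3'.
    by rewrite (star2_mul2_r Hst' stM) estar st1 stK.
Qed.
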